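(* A connected finite simple graph $G$ is zero--M--cordial if and only if $G$ is Eulerian (every vertex has even degree) and $G$ has an even number of edges.
   Context: A labeling of a graph $G$ is a map $f:E(G)\to\{-1,+1\}$; for each vertex $v$ set $f(v)=\sum_{e\in I(v)} f(e)$, where $I(v)$ is the set of edges incident to $v$. A labeling $f$ is zero--M--cordial if $f(v)=0$ for every vertex $v$. A graph is zero--M--cordial if it admits a zero--M--cordial labeling. *)

(* Defs.v *)
From mathcomp Require Import all_boot all_order all_algebra.
Set Implicit Arguments. Unset Strict Implicit. Unset Printing Implicit Defensive.
Import Order.TTheory GRing.Theory Num.Theory.

Definition simple_graph (T : finType) (e : rel T) : Prop :=
  symmetric e /\ irreflexive e.

Definition edges (T : finType) (e : rel T) : {set {set T}} :=
  [set [set x; y] | x in T, y in [pred y | e x y]].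

Definition deg (T : finType) (e : rel T) (v : T) : nat := #|[set y | e v y]|.

Definition connected_graph (T : finType) (e : rel T) : Prop :=
  forall x y : T, connect e x y.

Definition eulerian (T : finType) (e : rel T) : Prop :=
  forall v : T, ~~ odd (deg e v).

Definition vertex_label (T : finType) (e : rel T) (f : {set T} -> int) (v : T)
  : int := (\sum_(E in edges e | v \in E) f E)%R.

Definition zero_M_cordial_labeling (T : finType) (e : rel T)
  (f : {set T} -> int) : Prop :=
  (forall E, E \in edges e -> f E = 1%R \/ f E = (-1)%R) /\
  (forall v : T, vertex_label e f v = 0%R).

Definition zero_M_cordial (T : finType) (e : rel T) : Prop :=
  exists f : {set T} -> int, zero_M_cordial_labeling e f.

(* Main.v *)
Require Import Defs.
From mathcomp Require Import all_boot all_order all_algebra.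
From mathcomp Require Import ring zify.
Set Implicit Arguments. Unset Strict Implicit. Unset Printing Implicit Defensive.
Import Order.TTheory GRing.Theory Num.Theory.

Section PM.
Local Open Scope ring_scope.
Lemma sum_pm1 (I : finType) (P : pred I) (F : I -> int) :
  (forall i, P i -> F i = 1 \/ F i = -1) -> \sum_(i | P i) F i = 0 -> ~~ odd #|P|.
Proof.
move=> H.
have -> : \sum_(i | P i) F i = \sum_(i | P i) (1 - ((F i == -1) : nat)%:R *+ 2).
  by apply: eq_bigr => i /H [->|->].
rewrite sumrB sumrMnl -natr_sum.
rewrite (eq_bigl (fun i => i \in P)) // sumr_const.
move/eqP; rewrite subr_eq0 -mulrnA. rewrite eqr_nat => /eqP ->.
by rewrite oddM andbF.
Qed.
End PM.

Section Aux.
Variables (T : finType) (e : rel T).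
Hypothesis esym : symmetric e.
Hypothesis eirr : irreflexive e.

Fixpoint tedges (x : T) (p : seq T) : seq {set T} :=
  if p is y :: p' then [set x; y] :: tedges y p' else [::].

Lemma size_tedges x p : size (tedges x p) = size p.
Proof. by elim: p x => //= y p IH x; rewrite IH. Qed.

Lemma tedges_cat x p1 p2 :
  tedges x (p1 ++ p2) = tedges x p1 ++ tedges (last x p1) p2.
Proof. by elim: p1 x => //= y p IH x; rewrite IH. Qed.

Lemma tedges_rcons x p y :
  tedges x (rcons p y) = rcons (tedges x p) [set last x p; y].
Proof. by rewrite -cats1 tedges_cat cats1. Qed.

Lemma tedges_edge x p E : path e x p -> E \in tedges x p ->
  exists a b, [/\ e a b, a \in x :: p, b \in x :: p & E = [set a; b]].
Proof.
elim: p x => //= y p IH x /andP[exy pp]; rewrite inE => /orP[/eqP->|].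
  by exists x, y; rewrite !inE !eqxx orbT.
move=> /(IH _ pp) [a [b [eab ha hb ->]]]; exists a, b; split=> //.
  by rewrite inE ha orbT.
by rewrite inE hb orbT.
Qed.

Lemma tedges_in_edges x p E : path e x p -> E \in tedges x p -> E \in edges e.
Proof.
move=> pp /(tedges_edge pp) [a [b [eab _ _ ->]]].
by apply/imset2P; exists a b.
Qed.

Lemma edgesP E : reflect (exists a b, e a b /\ E = [set a; b]) (E \in edges e).
Proof.
apply: (iffP idP).
  by case/imset2P=> a b _; rewrite inE => eab ->; exists a, b.
by case=> a [b [eab ->]]; apply/imset2P; exists a b.
Qed.

Lemma count_parity x p w : path e x p ->
  odd (count (fun E : {set T} => w \in E) (tedges x p)) = (x == w) (+) (last x p == w).
Proof.
elim: p x => /=[|y p IH] x; first by rewrite addbb.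
case/andP=> exy pp; rewrite oddD oddb (IH y pp).
have xy : x != y by apply: contraTneq exy => ->; rewrite eirr.
rewrite !inE (eq_sym w x) (eq_sym w y).
have : ~~ ((x == w) && (y == w)).
  by apply/andP => -[/eqP xw /eqP yw]; move: xy; rewrite xw yw eqxx.
by case: (x == w); case: (y == w); case: (last y p == w).
Qed.

Lemma deg_card (S : pred {set T}) v : (forall E, S E -> E \in edges e) ->
  (forall y, e v y -> S [set v; y]) -> deg e v = #|[pred E | S E && (v \in E)]|.
Proof.
move=> SE eS; rewrite /deg -(@card_in_imset _ _ (fun y => [set v; y])).
  apply: eq_card => E; apply/imsetP/andP.
    case=> y; rewrite inE => vy ->; split; first exact: eS.
    by rewrite !inE eqxx.
  case=> /[dup] SEE /SE /edgesP [a [b [eab Eab]]]; rewrite Eab !inE.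
  case/orP=> /eqP va.
    by exists b; rewrite ?inE va.
  by exists a; [rewrite inE va esym | rewrite va setUC].
move=> y1 y2; rewrite !inE => vy1 vy2 eq12.
have : y1 \in [set v; y2] by rewrite -eq12 !inE eqxx orbT.
rewrite !inE => /orP[/eqP y1v|/eqP //].
by move: vy1; rewrite y1v eirr.
Qed.

Lemma card_uniq_count (s : seq {set T}) (P : pred {set T}) : uniq s ->
  #|[pred E | (E \in s) && P E]| = count P s.
Proof.
move=> us; rewrite -size_filter -(card_uniqP (filter_uniq P us)).
by apply: eq_card => E; rewrite /= mem_filter andbC.
Qed.

Lemma signed_sum x p (s : int) v : path e x p -> uniq (tedges x p) ->
  (\sum_(E <- tedges x p | v \in E) ((-1) ^+ index E (tedges x p) * s) =
   s * ((x == v)%:R - (-1) ^+ size p * (last x p == v)%:R))%R.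
Proof.
elim: p x s => /=[|y p IH] x s; first by rewrite big_nil expr0 mul1r subrr mulr0.
case/andP=> exy pp /andP[nin up].
have xy : x != y by apply: contraTneq exy => ->; rewrite eirr.
rewrite big_cons /=.
have -> : (\sum_(E <- tedges y p | v \in E)
     ((-1) ^+ (if [set x; y] == E then 0%N else (index E (tedges y p)).+1) * s) =
   \sum_(E <- tedges y p | v \in E) ((-1) ^+ index E (tedges y p) * - s))%R.
  rewrite [LHS]big_seq_cond [RHS]big_seq_cond; apply: eq_bigr => E /andP[Ein _] /=.
  have -> : ([set x; y] == E) = false.
    by apply/negbTE; apply: contraNneq nin => ->.
  by rewrite exprS mulN1r mulNr mulrN.
rewrite eqxx expr0 mul1r IH // !inE (eq_sym v x) (eq_sym v y) exprS.
have : ~~ ((x == v) && (y == v)).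
  by apply/andP => -[/eqP xw /eqP yw]; move: xy; rewrite xw yw eqxx.
move: (x == v) (y == v) (last y p == v) => a b c.
set t := ((-1) ^+ size p)%R.
case: a; case: b; case: c => //= _.

all: ring.
Qed.

Lemma closure_path x p : path e x p ->
  (forall w y, w \in x :: p -> e w y -> [set w; y] \in tedges x p) ->
  forall q z, z \in x :: p -> path e z q -> last z q \in x :: p.
Proof.
move=> pp H; elim=> //= a q IH z zin /andP[eza pq]; apply: IH pq.
have /(tedges_edge pp) [a' [b' [_ ha hb Eab]]] := H _ _ zin eza.
have : a \in [set a'; b'] by rewrite -Eab !inE eqxx orbT.
by rewrite !inE => /orP[/eqP->|/eqP->].
Qed.

Lemma step (eul : eulerian e) (conn : connected_graph e) x p :
  path e x p -> uniq (tedges x p) ->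
  (exists x' p', [/\ path e x' p', uniq (tedges x' p') & size p' = (size p).+1]) \/
  (last x p = x /\ forall E, (E \in edges e) = (E \in tedges x p)).
Proof.
move=> pp up.
case: (boolP [exists y, e (last x p) y && ([set last x p; y] \notin tedges x p)]).
  case/existsP => y /andP[ey ny]; left; exists x, (rcons p y).
  by rewrite rcons_path pp ey tedges_rcons rcons_uniq ny up size_rcons.
rewrite negb_exists => /forallP H.
have H' : forall y, e (last x p) y -> [set last x p; y] \in tedges x p.
  by move=> y ey; move: (H y); rewrite ey /= negbK.
have degL := deg_card (S := mem (tedges x p)) (fun E => @tedges_in_edges x p E pp) H'.
rewrite card_uniq_count // in degL.
have closed : last x p = x.
  have := eul (last x p); rewrite degL count_parity // eqxx addbT negbK.
  by move/eqP.
case: (boolP [exists w, exists y, [&& w \in x :: p, e w y & [set w; y] \notin tedges x p]]).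
  case/existsP => w /existsP [y /and3P [win ewy nwy]]; left.
  case: p pp up closed win nwy {H H' degL} => [|a q] pp up closed win nwy.
    move: win; rewrite inE => /eqP wx; exists x, [:: y].
    by rewrite /= -wx ewy.
  have wp : w \in a :: q.
    move: win; rewrite inE => /orP[/eqP ->|//].
    by move: closed => /= <-; apply: mem_last.
  move: pp up closed nwy {win}; case/splitPr: wp => p1 p2 pp up closed nwy.
  exists w, (rcons (p2 ++ rcons p1 w) y).
  have l2 : last w p2 = x by rewrite -closed last_cat.
  move: pp; rewrite cat_path /= => /and3P [pp1 ep1 pp2].
  have Hperm : perm_eq (tedges w (p2 ++ rcons p1 w)) (tedges x (p1 ++ w :: p2)).
    rewrite tedges_cat l2 tedges_rcons tedges_cat /=.
    by rewrite perm_catC -cats1 -catA.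
  split.
  - by rewrite rcons_path cat_path pp2 l2 rcons_path pp1 ep1 last_cat last_rcons ewy.
  - by rewrite tedges_rcons last_cat last_rcons rcons_uniq (perm_uniq Hperm) (perm_mem Hperm) nwy up.
  - by rewrite size_rcons !size_cat size_rcons /=; lia.
move/existsPn => H2; right; split=> // E.
apply/idP/idP; last exact: tedges_in_edges.
case/edgesP => a [b [eab ->]].
have H3 : forall w y, w \in x :: p -> e w y -> [set w; y] \in tedges x p.
  move=> w y wi ewy; move: (H2 w) => /existsPn /(_ y).
  by rewrite wi ewy /= negbK.
apply: (H3) => //.
have /connectP [q pq ->] := conn x a.
by apply: (closure_path pp H3) => //; rewrite inE eqxx.
Qed.

Lemma size_bound x p : path e x p -> uniq (tedges x p) -> size p <= #|edges e|.
Proof.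
move=> pp up; rewrite -(size_tedges x p) cardE; apply: uniq_leq_size => // E.
by rewrite mem_enum; apply: tedges_in_edges.
Qed.

Lemma euler (eul : eulerian e) (conn : connected_graph e) (x0 : T) :
  exists x p, [/\ path e x p, uniq (tedges x p), last x p = x &
    forall E, (E \in edges e) = (E \in tedges x p)].
Proof.
suff: forall n x p, path e x p -> uniq (tedges x p) -> #|edges e| - size p <= n ->
  exists x p, [/\ path e x p, uniq (tedges x p), last x p = x &
    forall E, (E \in edges e) = (E \in tedges x p)].
  by move/(_ #|edges e| x0 [::]); apply => //; rewrite subn0.
elim=> [|n IH] x p pp up hn; case: (step eul conn pp up) => [[x' [p' [pp' up' sz]]] | [cl cov]].
- by have := size_bound pp' up'; lia.
- by exists x, p.
- by apply: (IH x' p') => //; have := size_bound pp' up'; lia.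
- by exists x, p.
Qed.
End Aux.

Theorem theorem2 (T : finType) (e : rel T) :
  simple_graph e -> connected_graph e ->
  (zero_M_cordial e <-> (eulerian e /\ ~~ odd #|edges e|)).
Proof.
move=> [esym eirr] conn; split.
  case=> f [pm0 vl0]; split.
    move=> v; have := vl0 v; rewrite /vertex_label => h.
    rewrite (deg_card esym eirr (S := mem (edges e))) //; last first.
      by move=> y eyv; apply/edgesP; exists v, y.
    apply: (sum_pm1 (P := [pred E | (E \in edges e) && (v \in E)])) h.
    by move=> E /andP[Ein _]; apply: pm0.
  apply: (sum_pm1 (P := mem (edges e))); first by move=> E; apply: pm0.
  have : (\sum_v vertex_label e f v = 0)%R by apply: big1 => v _; apply: vl0.
  rewrite /vertex_label.
  rewrite (eq_bigr (fun v => \sum_(E in edges e) (if v \in E then f E else 0))%R); last first.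
    by move=> v _; rewrite big_mkcondr.
  rewrite exchange_big /=.
  rewrite (eq_bigr (fun E => f E *+ 2)%R); last first.
    move=> E /edgesP [a [b [eab ->]]]; rewrite -big_mkcond /= sumr_const cards2.
    by have -> : a != b by apply: contraTneq eab => ->; rewrite eirr.
  by rewrite sumrMnl => /eqP; rewrite mulrn_eq0 /= => /eqP.
case=> eul ev.
case: (pickP (fun _ : T => true)) => [x0 _|none]; last first.
  by exists (fun _ => 1%R); split=> [E _|v]; [left | have := none v].
have [x [p [pp up cl cov]]] := euler esym eirr eul conn x0.
exists (fun E => (-1) ^+ index E (tedges x p))%R; split.
  by move=> E _; rewrite -signr_odd; case: (odd _); [right|left].
move=> v; rewrite /vertex_label.
rewrite (eq_bigl (fun E => (E \in tedges x p) && (v \in E))); last by move=> E; rewrite cov.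
rewrite big_mkcondr -big_uniq // -big_mkcond /=.
rewrite (eq_bigr (fun E => (-1) ^+ index E (tedges x p) * 1)%R); last by move=> *; rewrite mulr1.
rewrite (signed_sum eirr) // cl.
have -> : size p = #|edges e|.
  rewrite (eq_card cov) -(size_tedges x p); by symmetry; apply/card_uniqP.
rewrite -signr_odd (negbTE ev) expr0 mul1r mul1r subrr.
by [].
Qed.
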